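(* Let $\ell\ge 1$, $N=2^\ell$, and let $D$ be an $N\times N$ binary dyadic matrix. If $S=\mathrm{supp}(\sigma(D))\subseteq \mathbb{F}_2^\ell$ is a linear subspace of $\mathbb{F}_2^\ell$ or a coset ${\mathbf a}+U$ of a linear subspace $U$ of $\mathbb{F}_2^\ell$, then $\mathrm{rank}_{\mathbb{F}_2}(D)=N/|S|$.
   Context: Rows and columns of $N\times N$ binary matrices ($N=2^\ell$) are indexed by $\mathbb{F}_2^\ell$ via the bijection ${\mathbf x}=(x_1,\dots,x_\ell)\leftrightarrow 1+\sum_{i=1}^\ell x_i2^{i-1}\in\{1,\dots,N\}$. A matrix $D\in\mathbb{F}_2^{N\times N}$ is dyadic if $D_{{\mathbf x},{\mathbf y}}=D_{{\bf 0},{\mathbf x}+{\mathbf y}}$ for all ${\mathbf x},{\mathbf y}\in\mathbb{F}_2^\ell$. The signature $\sigma(D)\in\mathbb{F}_2^N$ is the row of $D$ indexed by ${\bf 0}$; its support $\mathrm{supp}(\sigma(D))$ (set of positions with nonzero entries) is viewed as a subset of $\mathbb{F}_2^\ell$ via the bijection. *)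

(* Defs.v *)
From HB Require Import structures.
From mathcomp Require Import all_boot all_order all_algebra.
Set Implicit Arguments. Unset Strict Implicit. Unset Printing Implicit Defensive.
Import GRing.Theory.
Local Open Scope ring_scope.

(* N = 2^l; indices 0..N-1 (0-based version of 1..N). *)
Lemma pow2_gt0 (l : nat) : (0 < 2 ^ l)%N.
Proof. by rewrite expn_gt0. Qed.

Definition idx0 (l : nat) : 'I_(2 ^ l) := Ordinal (pow2_gt0 l).

(* Bijection 'I_(2^l) -> F_2^l : i = sum_k x_k 2^k, x_k = k-th bit of i. *)
Definition vec_of (l : nat) (i : 'I_(2 ^ l)) : 'rV['F_2]_l :=
  \row_(k < l) (odd (i %/ 2 ^ k))%:R.

Definition dyadic (l : nat) (D : 'M['F_2]_(2 ^ l)) : Prop :=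
  forall i j k : 'I_(2 ^ l), vec_of k = vec_of i + vec_of j -> D i j = D (idx0 l) k.

(* Support of the signature (row indexed by 0), as a subset of F_2^l. *)
Definition sig_supp (l : nat) (D : 'M['F_2]_(2 ^ l)) : {set 'rV['F_2]_l} :=
  [set vec_of k | k in [pred k : 'I_(2 ^ l) | D (idx0 l) k != 0]].

(* Main.v *)
Require Import Defs.
From mathcomp Require Import all_boot all_order all_algebra all_field.
Import GRing.Theory.
Local Open Scope ring_scope.

Lemma bits_inj (l i j : nat) : (i < 2 ^ l)%N -> (j < 2 ^ l)%N ->
  (forall k, (k < l)%N -> odd (i %/ 2 ^ k) = odd (j %/ 2 ^ k)) -> i = j.
Proof.
elim: l i j => [|l IH] i j.
  by rewrite expn0 !ltnS !leqn0 => /eqP -> /eqP ->.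
move=> Hi Hj H.
have H0 := H 0%N (ltn0Sn _); rewrite expn0 !divn1 in H0.
have Hh : i./2 = j./2.
  apply: IH.
  - by rewrite -divn2 ltn_divLR // -expnSr.
  - by rewrite -divn2 ltn_divLR // -expnSr.
  move=> k Hk; rewrite -!divn2 -!divnMA -expnS; exact: H.
by rewrite -(odd_double_half i) -(odd_double_half j) H0 Hh.
Qed.

Lemma F2_bool (b c : bool) : (b%:R : 'F_2) = c%:R -> b = c.
Proof. by case: b; case: c => // /eqP; rewrite ?oner_eq0 // eq_sym oner_eq0. Qed.

Lemma vec_of_inj l : injective (@vec_of l).
Proof.
move=> i j /rowP H; apply: val_inj; apply: (@bits_inj l); [exact: ltn_ord|exact: ltn_ord|move=> k Hk].
have := H (Ordinal Hk); rewrite !mxE; exact: F2_bool.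
Qed.

Lemma F2_val (x : 'F_2) : x = (x != 0)%:R.
Proof. by case: x => [[|[|n]] Hn] //; apply: val_inj. Qed.
Lemma vec_of_surj l (x : 'rV['F_2]_l) : exists i, vec_of i = x.
Proof.
have Hle : (#|{:'rV['F_2]_l}| <= #|{:'I_(2^l)}|)%N.
  by rewrite card_mx card_ord mul1n card_ord.
have /codomP [i ->] := @inj_card_onto _ _ _ (@vec_of_inj l) Hle x.
by exists i.
Qed.


Lemma Dentry l (D : 'M['F_2]_(2 ^ l)) : dyadic D ->
  forall i j, D i j = (vec_of i + vec_of j \in sig_supp D)%:R.
Proof.
move=> HD i j; have [k Hk] := vec_of_surj _ (vec_of i + vec_of j).
rewrite (HD i j k Hk) -Hk /sig_supp mem_imset; last exact: vec_of_inj.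
by rewrite inE [LHS]F2_val.
Qed.

Section Proj.
Variables (l : nat) (U : {vspace 'rV['F_2]_l}).
Local Notation W := (U^C)%VS.
Local Notation pi := (daddv_pi W U).

Lemma pi_mem z : pi z \in W. Proof. exact: memv_pi. Qed.

Lemma pi_id w : w \in W -> pi w = w.
Proof. by apply: daddv_pi_id; rewrite capvC capv_compl. Qed.

Lemma pi_eq0 z : (pi z == 0) = (z \in U).
Proof.
have Hadd := @daddv_pi_add _ _ U W z (capv_compl U).
rewrite addv_complf memvf in Hadd; have {}Hadd := Hadd isT.
apply/eqP/idP => [H0|Hz].
  by rewrite -Hadd H0 addr0 memv_pi.
move: Hadd; rewrite daddv_pi_id ?capv_compl //.
by move=> /(f_equal (fun t => - z + t)); rewrite addKr addNr.
Qed.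

Lemma pi_lin : linear pi. Proof. exact: linearP. Qed.
End Proj.


Lemma rank_coset l (U : {vspace 'rV['F_2]_l}) (a : 'rV['F_2]_l) (D : 'M['F_2]_(2 ^ l)) :
  (forall i j, D i j = (vec_of i + vec_of j - a \in U)%:R) ->
  \rank D = #|(U^C)%VS|.
Proof.
move=> HD.
set W := (U^C)%VS.
set pi := daddv_pi W U.
set n := #|W|.
pose w (k : 'I_n) : 'rV['F_2]_l := enum_val k.
have wW k : w k \in W by exact: enum_valP.
have w_inj : injective w by exact: enum_val_inj.
have sum1 (p q : 'rV['F_2]_l) : p \in W ->
    \sum_(k < n) (p == w k)%:R * (q == w k)%:R = (p == q)%:R :> 'F_2.
  move=> pW; rewrite (bigD1 (enum_rank_in pW p)) //=.
  rewrite /w enum_rankK_in // eqxx mul1r big1 ?addr0 ?(eq_sym q) //.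
  move=> k Hk; case: eqP => [Hp|]; last by rewrite mul0r.
  case/eqP: Hk; apply: enum_val_inj; rewrite enum_rankK_in //.
pose A : 'M['F_2]_(2 ^ l, n) := \matrix_(i, k) (pi (vec_of i - a) == w k)%:R.
pose C : 'M['F_2]_(n, 2 ^ l) := \matrix_(k, j) (pi (- vec_of j) == w k)%:R.
have DAC : D = A *m C.
  apply/matrixP => i j; rewrite HD !mxE.
  under eq_bigr do rewrite !mxE.
  rewrite sum1 ?pi_mem //; congr (_ %:R).
  rewrite -subr_eq0 -linearB /= -pi_eq0 opprK; congr (pi _ == 0).
  by rewrite addrAC.
have [jk Hjk] : exists jk : 'I_n -> 'I_(2 ^ l), forall k, vec_of (jk k) = - w k.
  by apply: (@fin_all_exists _ (fun _ => 'I_(2 ^ l)) (fun k j => vec_of j = - w k)) => k; apply: vec_of_surj.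
have [ik Hik] : exists ik : 'I_n -> 'I_(2 ^ l), forall k, vec_of (ik k) = w k + a.
  by apply: (@fin_all_exists _ (fun _ => 'I_(2 ^ l)) (fun k j => vec_of j = w k + a)) => k; apply: vec_of_surj.
have freeC : row_free C.
  apply/row_freeP; exists (\matrix_(j, k) (j == jk k)%:R).
  apply/matrixP => k k'; rewrite !mxE (bigD1 (jk k')) //= big1 ?addr0.
    by rewrite !mxE eqxx mulr1 Hjk opprK pi_id // (inj_eq w_inj) eq_sym.
  by move=> j Hj; rewrite !mxE (negbTE Hj) mulr0.
have freeA : row_free A^T.
  apply/row_freeP; exists (\matrix_(i, k) (i == ik k)%:R).
  apply/matrixP => k k'; rewrite !mxE (bigD1 (ik k')) //= big1 ?addr0.
    by rewrite !mxE eqxx mulr1 Hik addrK pi_id // (inj_eq w_inj) eq_sym.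
  by move=> j Hj; rewrite !mxE (negbTE Hj) mulr0.
by rewrite DAC mxrankMfree // -mxrank_tr; apply/eqP.
Qed.


Lemma cardF2 : #|'F_2| = 2%N. Proof. by rewrite card_Fp. Qed.

Lemma dimfull l : \dim (fullv : {vspace 'rV['F_2]_l}) = l.
Proof. by rewrite dimvf /dim /= mul1n. Qed.

Theorem mainTheorem1 (l : nat) (D : 'M['F_2]_(2 ^ l)) :
  (1 <= l)%N -> dyadic D ->
  ((exists U : {vspace 'rV['F_2]_l}, sig_supp D = [set x | x \in U]) \/
   (exists (a : 'rV['F_2]_l) (U : {vspace 'rV['F_2]_l}),
       sig_supp D = [set x | x - a \in U])) ->
  \rank D = (2 ^ l %/ #|sig_supp D|)%N.
Proof.
move=> _ HD H.
have [a [U HS]] : exists (a : 'rV['F_2]_l) (U : {vspace 'rV['F_2]_l}),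
       sig_supp D = [set x | x - a \in U].
  case: H => [[U HU]|//]; exists 0, U; rewrite HU; apply/setP => x.
  by rewrite !inE subr0.
have HDe i j : D i j = (vec_of i + vec_of j - a \in U)%:R.
  by rewrite Dentry // HS inE.
rewrite (@rank_coset _ _ _ _ HDe).
have -> : #|sig_supp D| = #|U|.
  have -> : sig_supp D = (fun x => x - a) @^-1: [set x in U].
    by rewrite HS; apply/setP => x; rewrite !inE.
  rewrite card_preimset; last exact: addIr.
  by apply: eq_card => x; rewrite inE.
rewrite !card_vspace cardF2 dimv_compl dimfull expnB //.
have := dimvS (subvf U); by rewrite dimfull.
Qed.
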